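(* Assume the total harvested energy is finite, so that problem (P) below has an optimal solution. Then there exists an optimal solution $\{p_{k,i},\delta_{k,i}\}$ of (P) that is a procrastinating policy, i.e. it satisfies $$p_{k,i}-\alpha_j\delta_{j,i}\ge 0\quad\text{for all } j,k\in\{1,2\},\ j\neq k,\ i=1,\dots,N.$$
   Context: Two-way channel setting. There are two nodes $T_1,T_2$ and $N$ time slots of unit length. The fixed parameters are channel power gains $h_1,h_2>0$, noise powers $\sigma_1^2,\sigma_2^2>0$, energy transfer efficiencies $\alpha_1,\alpha_2\in[0,1]$, and harvested energies $E_{k,i}\ge 0$ ($k=1,2$, $i=1,\dots,N$). A power policy is a collection $\{p_{k,i},\delta_{k,i}\}_{k=1,2;\,i=1,\dots,N}$. Here $p_{k,i}$ is the transmit power (energy) of $T_k$ in slot $i$, and $\delta_{k,i}$ is the energy sent by $T_k$ to the other node $T_j$ ($j\neq k$) in slot $i$, of which $T_j$ receives $\alpha_k\delta_{k,i}$. With infinite batteries the battery state is $$S_{k,i}=\sum_{n=1}^{i}\big(E_{k,n}-p_{k,n}+\alpha_j\delta_{j,n}-\delta_{k,n}\big),\qquad j\neq k.$$ Let $$C(p_1,p_2)=\tfrac12\log\!\Big(1+\tfrac{h_1p_1}{\sigma_2^2}\Big)+\tfrac12\log\!\Big(1+\tfrac{h_2p_2}{\sigma_1^2}\Big).$$ Problem (P) is to maximize $\sum_{i=1}^N C(p_{1,i},p_{2,i})$ over all power policies, subject to $S_{k,i}\ge 0$, $p_{k,i}\ge0$ and $\delta_{k,i}\ge 0$ for all $k=1,2$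 and $i=1,\dots,N$. *)

(* Defs.v *)
From Stdlib Require Import Reals.
Open Scope R_scope.

Inductive node : Set := T1 | T2.

Definition other (k : node) : node := match k with T1 => T2 | T2 => T1 end.

Fixpoint sumR (f : nat -> R) (n : nat) : R :=
  match n with
  | O => 0
  | S m => sumR f m + f (S m)
  end.

(* A power policy: p k i = p_{k,i}, d k i = delta_{k,i} (only i = 1..N matter). *)
Record policy : Type := mkPolicy {
  p : node -> nat -> R;
  d : node -> nat -> R }.

(* battery state S_{k,i} (infinite batteries) *)
Definition battery (alpha : node -> R) (E : node -> nat -> R)
  (P : policy) (k : node) (i : nat) : R :=
  sumR (fun n => E k n - p P k n + alpha (other k) * d P (other k) n - d P k n) i.

(* C(p1,p2) = 1/2 log(1 + h1 p1 / sigma2^2) + 1/2 log(1 + h2 p2 / sigma1^2);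
   sigma2 k denotes the noise power sigma_k^2 of node k. *)
Definition Crate (h sigma2 : node -> R) (p1 p2 : R) : R :=
  / 2 * ln (1 + h T1 * p1 / sigma2 T2) + / 2 * ln (1 + h T2 * p2 / sigma2 T1).

Definition objective (h sigma2 : node -> R) (N : nat) (P : policy) : R :=
  sumR (fun i => Crate h sigma2 (p P T1 i) (p P T2 i)) N.

Definition feasible (alpha : node -> R) (E : node -> nat -> R) (N : nat)
  (P : policy) : Prop :=
  forall k i, (1 <= i <= N)%nat ->
    0 <= battery alpha E P k i /\ 0 <= p P k i /\ 0 <= d P k i.

Definition optimal (h sigma2 alpha : node -> R) (E : node -> nat -> R)
  (N : nat) (P : policy) : Prop :=
  feasible alpha E N P /\
  forall Q, feasible alpha E N Q -> objective h sigma2 N Q <= objective h sigma2 N P.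

Definition procrastinating (alpha : node -> R) (N : nat) (P : policy) : Prop :=
  forall k i, (1 <= i <= N)%nat -> 0 <= p P k i - alpha (other k) * d P (other k) i.

(* Main.v *)
Require Import Defs.
From Stdlib Require Import Reals Lra Psatz.
Open Scope R_scope.

Definition sn (a : node -> R) (c1 c2 : R) (k : node) : R :=
  match k with
  | T2 => if Rlt_dec c1 0 then - c1 / a T2 else 0
  | T1 => if Rlt_dec c1 0 then 0 else if Rlt_dec c2 0 then - c2 / a T1 else 0
  end.

Fixpoint bat (a : node -> R) (E : node -> nat -> R) (q : node -> nat -> R) (i : nat)
  : R * R :=
  match i with
  | O => (0, 0)
  | S m => let b := bat a E q m in
     let c1 := fst b + E T1 (S m) - q T1 (S m) in
     let c2 := snd b + E T2 (S m) - q T2 (S m) in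
     (c1 + a T2 * sn a c1 c2 T2 - sn a c1 c2 T1,
      c2 + a T1 * sn a c1 c2 T1 - sn a c1 c2 T2)
  end.

Definition newd (a : node -> R) (E : node -> nat -> R) (q : node -> nat -> R)
  (k : node) (i : nat) : R :=
  match i with
  | O => 0
  | S m => let b := bat a E q m in
     sn a (fst b + E T1 (S m) - q T1 (S m)) (snd b + E T2 (S m) - q T2 (S m)) k
  end.

Lemma step a1 a2 b1 b2 o1 o2 X Y e1 e2 q1 q2 d1 d2 :
  0 <= a1 <= 1 -> 0 <= a2 <= 1 -> 0 <= b1 -> 0 <= b2 -> 0 <= X -> 0 <= Y ->
  b1 - X + a2 * Y >= o1 -> b2 - Y + a1 * X >= o2 ->
  0 <= e1 -> 0 <= e2 -> 0 <= d1 -> 0 <= d2 -> 0 <= q1 -> 0 <= q2 ->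
  0 <= o1 + (e1 - q1 + a2 * d2 - d1) -> 0 <= o2 + (e2 - q2 + a1 * d1 - d2) ->
  forall a : node -> R, a T1 = a1 -> a T2 = a2 ->
  let c1 := b1 + e1 - q1 in let c2 := b2 + e2 - q2 in
  let s1 := sn a c1 c2 T1 in let s2 := sn a c1 c2 T2 in
  0 <= s1 /\ 0 <= s2 /\ 0 <= c1 + a2 * s2 - s1 /\ 0 <= c2 + a1 * s1 - s2 /\
  0 <= q1 - a2 * s2 /\ 0 <= q2 - a1 * s1 /\
  exists X' Y', 0 <= X' /\ 0 <= Y' /\
    c1 + a2 * s2 - s1 - X' + a2 * Y' >= o1 + (e1 - q1 + a2 * d2 - d1) /\
    c2 + a1 * s1 - s2 - Y' + a1 * X' >= o2 + (e2 - q2 + a1 * d1 - d2).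
Proof.
  intros Ha1 Ha2 Hb1 Hb2 HX HY H1 H2 He1 He2 Hd1 Hd2 Hq1 Hq2 Ho1 Ho2 a Ea1 Ea2.
  intros c1 c2 s1 s2.
  set (Xc := X + d1). set (Yc := Y + d2).
  assert (K1 : c1 - Xc + a2 * Yc >= o1 + (e1 - q1 + a2 * d2 - d1)) by (unfold c1, Xc, Yc; lra).
  assert (K2 : c2 - Yc + a1 * Xc >= o2 + (e2 - q2 + a1 * d1 - d2)) by (unfold c2, Xc, Yc; lra).
  assert (HXc : 0 <= Xc) by (unfold Xc; lra).
  assert (HYc : 0 <= Yc) by (unfold Yc; lra).
  unfold s1, s2, sn; rewrite Ea1, Ea2.
  destruct (Rlt_dec c1 0) as [Hc1|Hc1].
  - assert (Hpos : 0 < a2) by (apply Rnot_le_lt; intro hh; assert (hz : a2 = 0) by lra; rewrite hz in *; lra).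
    set (t := - c1 / a2).
    assert (Ht : a2 * t = - c1) by (unfold t; field; lra).
    assert (Ht0 : 0 <= t) by (unfold t; apply Rmult_le_pos; [lra| left; apply Rinv_0_lt_compat; lra]).
    assert (Hle : t <= Yc - a1 * Xc).
    { assert (a2 * (Yc - a1 * Xc - t) >= 0).
      { assert (a1 * a2 * Xc <= Xc).
        { assert (a1 * a2 <= 1) by nra. nra. }
        nra. }
      nra. }
    split; [lra|]. split; [lra|]. split; [lra|]. split; [lra|].
    split; [unfold c1 in *; lra|]. split; [lra|].
    exists Xc, (Yc - t). split; [lra|]. split; [nra|]. split; nra.
  - destruct (Rlt_dec c2 0) as [Hc2|Hc2].
    + assert (Hpos : 0 < a1) by (apply Rnot_le_lt; intro hh; assert (hz : a1 = 0) by lra; rewrite hz in *; lra).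
      set (t := - c2 / a1).
      assert (Ht : a1 * t = - c2) by (unfold t; field; lra).
      assert (Ht0 : 0 <= t) by (unfold t; apply Rmult_le_pos; [lra| left; apply Rinv_0_lt_compat; lra]).
      assert (Hle : t <= Xc - a2 * Yc).
      { assert (a1 * (Xc - a2 * Yc - t) >= 0).
        { assert (a1 * a2 * Yc <= Yc).
          { assert (a1 * a2 <= 1) by nra. nra. }
          nra. }
        nra. }
      split; [lra|]. split; [lra|]. split; [lra|]. split; [lra|].
      split; [lra|]. split; [unfold c2 in *; lra|].
      exists (Xc - t), Yc. split; [nra|]. split; [lra|]. split; nra.
    + split; [lra|]. split; [lra|]. split; [lra|]. split; [lra|].
      split; [lra|]. split; [lra|].
      exists Xc, Yc. split; [lra|]. split; [lra|]. split; lra.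
Qed.

Lemma bat_eq alpha E q i :
  battery alpha E (mkPolicy q (newd alpha E q)) T1 i = fst (bat alpha E q i) /\
  battery alpha E (mkPolicy q (newd alpha E q)) T2 i = snd (bat alpha E q i).
Proof.
  induction i as [|m [IH1 IH2]].
  - simpl. unfold battery. simpl. split; reflexivity.
  - unfold battery in *. simpl in *. rewrite IH1, IH2. split; ring.
Qed.

Lemma battery_S a E P k m : battery a E P k (S m) = battery a E P k m +
  (E k (S m) - p P k (S m) + a (other k) * d P (other k) (S m) - d P k (S m)).
Proof. reflexivity. Qed.

Theorem lemma1 (N : nat) (h sigma2 alpha : node -> R) (E : node -> nat -> R)
  (Hh : forall k, 0 < h k)
  (Hs : forall k, 0 < sigma2 k)
  (Ha : forall k, 0 <= alpha k <= 1)
  (HE : forall k i, 0 <= E k i)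
  (Hopt : exists P, optimal h sigma2 alpha E N P) :
  exists P, optimal h sigma2 alpha E N P /\ procrastinating alpha N P.
Proof.
  destruct Hopt as [P [Hf Hbest]].
  set (q := p P).
  set (P' := mkPolicy q (newd alpha E q)).
  assert (Inv : forall i, (i <= N)%nat ->
    0 <= fst (bat alpha E q i) /\ 0 <= snd (bat alpha E q i) /\
    exists X Y, 0 <= X /\ 0 <= Y /\
      fst (bat alpha E q i) - X + alpha T2 * Y >= battery alpha E P T1 i /\
      snd (bat alpha E q i) - Y + alpha T1 * X >= battery alpha E P T2 i).
  { induction i as [|m IH]; intros Hi.
    - simpl. unfold battery. simpl. split; [lra|]. split; [lra|].
      exists 0, 0. lra.
    - destruct IH as [Hb1 [Hb2 [X [Y [HX [HY [H1 H2]]]]]]]; [lia|].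
      destruct (Hf T1 (S m)) as [F1 [Fp1 Fd1]]; [lia|].
      destruct (Hf T2 (S m)) as [F2 [Fp2 Fd2]]; [lia|].
      unfold battery in F1, F2. simpl sumR in F1, F2. simpl other in F1, F2.
      fold (battery alpha E P T1 m) in F1. fold (battery alpha E P T2 m) in F2.
      destruct (step (alpha T1) (alpha T2) _ _ (battery alpha E P T1 m) (battery alpha E P T2 m) X Y (E T1 (S m)) (E T2 (S m))
        (q T1 (S m)) (q T2 (S m)) (d P T1 (S m)) (d P T2 (S m))
        (Ha T1) (Ha T2) Hb1 Hb2 HX HY H1 H2 (HE _ _) (HE _ _) Fd1 Fd2 Fp1 Fp2
        F1 F2 alpha eq_refl eq_refl)
        as [_ [_ [G1 [G2 [_ [_ [X' [Y' [HX' [HY' [G3 G4]]]]]]]]]]].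
      simpl bat. simpl fst. simpl snd.
      split; [exact G1|]. split; [exact G2|].
      exists X', Y'. split; [exact HX'|]. split; [exact HY'|].
      rewrite !battery_S. simpl other. split; [exact G3|exact G4]. }
  assert (Step : forall m, (S m <= N)%nat ->
    0 <= newd alpha E q T1 (S m) /\ 0 <= newd alpha E q T2 (S m) /\
    0 <= q T1 (S m) - alpha T2 * newd alpha E q T2 (S m) /\
    0 <= q T2 (S m) - alpha T1 * newd alpha E q T1 (S m)).
  { intros m Hm.
    destruct (Inv m) as [Hb1 [Hb2 [X [Y [HX [HY [H1 H2]]]]]]]; [lia|].
    destruct (Hf T1 (S m)) as [F1 [Fp1 Fd1]]; [lia|].
    destruct (Hf T2 (S m)) as [F2 [Fp2 Fd2]]; [lia|].
    unfold battery in F1, F2. simpl sumR in F1, F2. simpl other in F1, F2.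
    fold (battery alpha E P T1 m) in F1. fold (battery alpha E P T2 m) in F2.
    destruct (step (alpha T1) (alpha T2) _ _ (battery alpha E P T1 m) (battery alpha E P T2 m) X Y (E T1 (S m)) (E T2 (S m))
      (q T1 (S m)) (q T2 (S m)) (d P T1 (S m)) (d P T2 (S m))
      (Ha T1) (Ha T2) Hb1 Hb2 HX HY H1 H2 (HE _ _) (HE _ _) Fd1 Fd2 Fp1 Fp2
      F1 F2 alpha eq_refl eq_refl)
      as [G1 [G2 [_ [_ [G5 [G6 _]]]]]].
    simpl newd. tauto. }
  exists P'. split; [split|].
  - intros k i Hi. destruct i as [|m]; [lia|].
    destruct (bat_eq alpha E q (S m)) as [B1 B2].
    destruct (Inv (S m)) as [Hb1 [Hb2 _]]; [lia|].
    destruct (Step m) as [S1 [S2 _]]; [lia|].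
    destruct (Hf k (S m)) as [_ [Fp _]]; [lia|].
    destruct k; simpl p; simpl d; fold P'; fold q in Fp.
    + split; [unfold P'; rewrite B1; exact Hb1|]. split; [exact Fp|exact S1].
    + split; [unfold P'; rewrite B2; exact Hb2|]. split; [exact Fp|exact S2].
  - intros Q HQ. apply (Hbest Q HQ).
  - intros k i Hi. destruct i as [|m]; [lia|].
    destruct (Step m) as [_ [_ [S3 S4]]]; [lia|].
    destruct k; simpl; assumption.
Qed.
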